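(* Let $(X,d)$ be a metric space admitting a weak convergence $w$, and let $(G,\rho)$ be a proper metric group acting on $X$ such that the action is isometric, metrically compatible, and weakly compatible. Then $w$ is a weak convergence for $(X,d_{G,\rho})$.
   Context: A convergence $c$ on a set $X$ is a rule assigning at most one point of $X$ as the ''limit'' of each sequence in $X$, such that whenever a sequence has limit $x$, every subsequence also has limit $x$; we write $x_n\to x$ in $c$. A convergence $w$ on $X$ is a weak convergence for $(X,d)$ if: (W1) whenever $\{x_n\}$ and $y$ in $X$ satisfy $\sup_n d(x_n,y)<\infty$, there are a subsequence $\{n_k\}$ and $x\in X$ with $x_{n_k}\to x$ in $w$; (W2) whenever $x_n\to x$ in $w$, $d(x,y)\le\liminf_n d(x_n,y)$ for all $y\in X$; (W3) whenever $x_n\to x$ in $w$ and $d(x_n,y)\to d(x,y)$ for some $y\in X$, then $d(x_n,x)\to0$. $(G,\rho)$ is a metric group if $\rho$ is a left-invariant metric on the group $G$ whose topology makes $G$ a topological group; it is proper if, in addition, closed $\rho$-bounded sets are compact. The action is isometric if $d(g\cdot x,g\cdot x')=d(x,x')$; it is compatible with a convergence $c$ on $X$ if $x_n\to x$ in $c$ and $g_n\to g$ in $G$ imply $g_n\cdot x_n\to g\cdot x$ in $c$; metrically compatible means compatible with convergence in $d$, weakly compatible means compatible with $w$. The regularized metric is $d_{G,\rho}(x,x'):=\min_{g\in G}\sqrt{\rho^2(g,e)+d^2(x,g\cdot x')}$, where $e$ is the identity of $G$. *)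

(* Defs.v *)
From Stdlib Require Import Reals List.
From Coquelicot Require Import Coquelicot.
Open Scope R_scope.

Definition strictly_increasing (phi : nat -> nat) : Prop :=
  forall n, (phi n < phi (S n))%nat.

Definition is_convergence {X : Type} (c : (nat -> X) -> X -> Prop) : Prop :=
  (forall (u : nat -> X) (x y : X), c u x -> c u y -> x = y) /\
  (forall (u : nat -> X) (x : X) (phi : nat -> nat),
      strictly_increasing phi -> c u x -> c (fun n => u (phi n)) x).

Definition is_metric {X : Type} (d : X -> X -> R) : Prop :=
  (forall x y, 0 <= d x y) /\
  (forall x y, d x y = 0 <-> x = y) /\
  (forall x y, d x y = d y x) /\
  (forall x y z, d x z <= d x y + d y z).

Definition metric_conv {X : Type} (d : X -> X -> R) (u : nat -> X) (x : X) : Prop :=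
  is_lim_seq (fun n => d (u n) x) 0.

Definition is_weak_convergence {X : Type} (D : X -> X -> R)
    (w : (nat -> X) -> X -> Prop) : Prop :=
  (forall (u : nat -> X) (y : X),
      (exists M : R, forall n, D (u n) y <= M) ->
      exists (phi : nat -> nat) (x : X),
        strictly_increasing phi /\ w (fun k => u (phi k)) x) /\
  (forall (u : nat -> X) (x : X), w u x ->
      forall y : X, Rbar_le (Finite (D x y)) (LimInf_seq (fun n => D (u n) y))) /\
  (forall (u : nat -> X) (x y : X), w u x ->
      is_lim_seq (fun n => D (u n) y) (D x y) ->
      is_lim_seq (fun n => D (u n) x) 0).

Definition is_group {G : Type} (mul : G -> G -> G) (inv : G -> G) (e : G) : Prop :=
  (forall a b c, mul a (mul b c) = mul (mul a b) c) /\
  (forall a, mul e a = a) /\ (forall a, mul a e = a) /\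
  (forall a, mul (inv a) a = e) /\ (forall a, mul a (inv a) = e).

Definition mopen {G : Type} (rho : G -> G -> R) (U : G -> Prop) : Prop :=
  forall x, U x -> exists r, 0 < r /\ forall y, rho x y < r -> U y.

Definition mclosed {G : Type} (rho : G -> G -> R) (K : G -> Prop) : Prop :=
  mopen rho (fun x => ~ K x).

Definition mbounded {G : Type} (rho : G -> G -> R) (K : G -> Prop) : Prop :=
  exists (x0 : G) (M : R), forall x, K x -> rho x0 x <= M.

Definition mcompact {G : Type} (rho : G -> G -> R) (K : G -> Prop) : Prop :=
  forall (I : Type) (U : I -> G -> Prop),
    (forall i, mopen rho (U i)) ->
    (forall x, K x -> exists i, U i x) ->
    exists l : list I, forall x, K x -> exists i, In i l /\ U i x.

Definition is_metric_group {G : Type} (mul : G -> G -> G) (inv : G -> G) (e : G)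
    (rho : G -> G -> R) : Prop :=
  is_group mul inv e /\ is_metric rho /\
  (forall g a b, rho (mul g a) (mul g b) = rho a b) /\
  (forall a b eps, 0 < eps -> exists delta, 0 < delta /\
      forall a' b', rho a a' < delta -> rho b b' < delta ->
        rho (mul a b) (mul a' b') < eps) /\
  (forall a eps, 0 < eps -> exists delta, 0 < delta /\
      forall a', rho a a' < delta -> rho (inv a) (inv a') < eps).

Definition is_proper_metric_group {G : Type} (mul : G -> G -> G) (inv : G -> G)
    (e : G) (rho : G -> G -> R) : Prop :=
  is_metric_group mul inv e rho /\
  (forall K : G -> Prop, mclosed rho K -> mbounded rho K -> mcompact rho K).

Definition is_action {G X : Type} (mul : G -> G -> G) (e : G)
    (act : G -> X -> X) : Prop :=
  (forall x, act e x = x) /\ (forall g h x, act (mul g h) x = act g (act h x)).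

Definition is_isometric_action {G X : Type} (d : X -> X -> R) (act : G -> X -> X) : Prop :=
  forall g x x', d (act g x) (act g x') = d x x'.

Definition action_compatible {G X : Type} (rho : G -> G -> R) (act : G -> X -> X)
    (c : (nat -> X) -> X -> Prop) : Prop :=
  forall (u : nat -> X) (x : X) (gs : nat -> G) (g : G),
    c u x -> metric_conv rho gs g -> c (fun n => act (gs n) (u n)) (act g x).

(** The regularized metric d_{G,rho}(x,x') =
    inf_g sqrt(rho(g,e)^2 + d(x, g.x')^2) (the paper writes min). *)
Definition reg_metric {G X : Type} (d : X -> X -> R) (rho : G -> G -> R) (e : G)
    (act : G -> X -> X) (x x' : X) : R :=
  real (Glb_Rbar (fun r => exists g : G,
          r = sqrt (rho g e ^ 2 + d x (act g x') ^ 2))).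

(* Main.v *)
Require Import Defs.
From Stdlib Require Import Reals Lra Lia Classical ClassicalEpsilon FunctionalExtensionality List.
From Coquelicot Require Import Coquelicot.
Open Scope R_scope.

Lemma choice_nat {A : Type} (P : nat -> A -> Prop) :
  (forall n, exists a, P n a) -> exists f : nat -> A, forall n, P n (f n).
Proof.
  intros H. exists (fun n => proj1_sig (constructive_indefinite_description _ (H n))).
  intros n. exact (proj2_sig (constructive_indefinite_description _ (H n))).
Qed.

Lemma extract (P : nat -> nat -> Prop) :
  (forall k N, exists n, (N <= n)%nat /\ P k n) ->
  exists phi, strictly_increasing phi /\ forall k, P k (phi k).
Proof.
  intros H.
  assert (Hf : forall k N, {n | (N <= n)%nat /\ P k n}).
  { intros k N. apply constructive_indefinite_description. apply H. }
  pose (phi := nat_rect (fun _ => nat) (proj1_sig (Hf 0%nat 0%nat))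
                 (fun k p => proj1_sig (Hf (S k) (S p)))).
  exists phi. split.
  - intros k. change (phi (S k)) with (proj1_sig (Hf (S k) (S (phi k)))).
    destruct (proj2_sig (Hf (S k) (S (phi k)))). lia.
  - intros [|k].
    + exact (proj2 (proj2_sig (Hf 0%nat 0%nat))).
    + change (phi (S k)) with (proj1_sig (Hf (S k) (S (phi k)))).
      exact (proj2 (proj2_sig (Hf (S k) (S (phi k))))).
Qed.

Lemma si_mono phi : strictly_increasing phi -> forall m n, (m < n)%nat -> (phi m < phi n)%nat.
Proof.
  intros H m n Hmn. induction Hmn.
  - apply H.
  - specialize (H m0). lia.
Qed.

Lemma si_ge phi : strictly_increasing phi -> forall k, (k <= phi k)%nat.
Proof.
  intros H k. induction k. lia. specialize (H k). lia.
Qed.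

Lemma si_comp phi psi : strictly_increasing phi -> strictly_increasing psi ->
  strictly_increasing (fun k => phi (psi k)).
Proof.
  intros H1 H2 k. apply si_mono; auto.
Qed.

Lemma lim_sub u l phi : strictly_increasing phi -> is_lim_seq u l ->
  is_lim_seq (fun k => u (phi k)) l.
Proof.
  intros H1 H2. apply is_lim_seq_subseq; auto. apply eventually_subseq. exact H1.
Qed.

Lemma lim_ev u (l : R) : is_lim_seq u l -> forall eps, 0 < eps ->
  exists N, forall n, (N <= n)%nat -> l - eps < u n < l + eps.
Proof.
  intros H eps Heps. apply is_lim_seq_spec in H.
  destruct (H (mkposreal eps Heps)) as [N HN]. exists N. intros n Hn.
  specialize (HN n Hn). simpl in HN. apply Rabs_lt_between' in HN. exact HN.
Qed.

Lemma ev_lim u (l : R) : (forall eps, 0 < eps ->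
  exists N, forall n, (N <= n)%nat -> l - eps < u n < l + eps) -> is_lim_seq u l.
Proof.
  intros H. apply is_lim_seq_spec. intros [eps Heps].
  destruct (H eps Heps) as [N HN]. exists N. intros n Hn. simpl.
  apply Rabs_lt_between'. apply HN; auto.
Qed.

Lemma liminf_ev v (a : R) : Rbar_le (Finite a) (LimInf_seq v) ->
  forall eps, 0 < eps -> exists N, forall n, (N <= n)%nat -> a - eps < v n.
Proof.
  intros H eps Heps. destruct (ex_LimInf_seq v) as [l Hl].
  rewrite (is_LimInf_seq_unique _ _ Hl) in H.
  destruct l as [l| |]; simpl in H, Hl.
  - destruct (Hl (mkposreal eps Heps)) as [_ [N HN]]. exists N. intros n Hn.
    specialize (HN n Hn). simpl in HN. lra.
  - destruct (Hl (a - eps)) as [N HN]. exists N. auto.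
  - contradiction.
Qed.

Lemma inv_lim : is_lim_seq (fun n => / INR (S n)) 0.
Proof.
  assert (H := is_lim_seq_inv _ _ is_lim_seq_INR).
  simpl in H. specialize (H ltac:(discriminate)).
  apply is_lim_seq_incr_1 in H. exact H.
Qed.

Lemma inv_le1 n : 0 < / INR (S n) <= 1.
Proof.
  rewrite S_INR. assert (0 <= INR n) by apply pos_INR. split.
  apply Rinv_0_lt_compat; lra.
  rewrite <- Rinv_1. apply Rinv_le_contravar; lra.
Qed.

Lemma glb_facts (S : R -> Prop) s0 : S s0 -> (forall s, S s -> 0 <= s) ->
  0 <= real (Glb_Rbar S) /\ (forall s, S s -> real (Glb_Rbar S) <= s) /\
  (forall eps, 0 < eps -> exists s, S s /\ s < real (Glb_Rbar S) + eps).
Proof.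
  intros Hs0 Hpos. destruct (Glb_Rbar_correct S) as [Hlb Hgl].
  destruct (Glb_Rbar S) as [m| |] eqn:Em; simpl.
  - assert (H0 : Rbar_le 0 m) by (apply Hgl; intros s Hs; simpl; auto).
    simpl in H0. split; [exact H0|]. split.
    + intros s Hs. exact (Hlb s Hs).
    + intros eps Heps. apply NNPP. intros Hn.
      assert (Hl : Rbar_le (m + eps) m).
      { apply Hgl. intros s Hs. simpl. destruct (Rle_dec (m + eps) s); auto.
        exfalso. apply Hn. exists s. split; auto; lra. }
      simpl in Hl. lra.
  - specialize (Hlb s0 Hs0). simpl in Hlb. contradiction.
  - assert (H0 : Rbar_le 0 m_infty) by (apply Hgl; intros s Hs; simpl; auto).
    simpl in H0. contradiction.
Qed.

Lemma sqlb s b eps : 0 <= s -> 0 <= b -> 0 <= eps -> b - eps < s -> b^2 - 2*b*eps <= s^2.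
Proof.
  intros. destruct (Rle_dec eps b).
  - assert (0 <= b - eps) by lra. nra.
  - nra.
Qed.

Lemma sq_le a b : 0 <= a -> a <= sqrt (a^2 + b^2).
Proof.
  intros Ha. rewrite <- (sqrt_pow2 a Ha) at 1. apply sqrt_le_1_alt. nra.
Qed.

Lemma list_bound {A B : Type} (l : list (A * B * nat)) :
  exists Nb, forall i, In i l -> (snd i <= Nb)%nat.
Proof.
  induction l as [|a l [Nb HN]].
  - exists 0%nat. intros i [].
  - exists (Nat.max (snd a) Nb). intros i [<-|Hi]. lia. specialize (HN i Hi). lia.
Qed.

Lemma seqcompact {G : Type} (mul : G -> G -> G) (inv : G -> G) (e : G) (rho : G -> G -> R) :
  is_proper_metric_group mul inv e rho ->
  forall (gs : nat -> G) M, (forall n, rho (gs n) e <= M) ->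
  exists phi g, strictly_increasing phi /\ is_lim_seq (fun k => rho (gs (phi k)) g) 0.
Proof.
  intros [[_ [[Hpos [Hzero [Hsym Htri]]] _]] Hprop] gs M HM.
  set (K := fun h => rho h e <= M).
  assert (Hc : mcompact rho K).
  { apply Hprop.
    - intros x Hx. unfold K in Hx. exists (rho x e - M). split. lra.
      intros y Hy Ky. unfold K in Ky. specialize (Htri x y e). lra.
    - exists e, M. intros x Kx. unfold K in Kx. rewrite Hsym. exact Kx. }
  destruct (classic (exists g, forall r, 0 < r -> forall N, exists n, (N <= n)%nat /\ rho g (gs n) < r)) as [[g Hg]|Hn].
  - destruct (extract (fun k n => rho g (gs n) < / INR (S k))) as [phi [Hphi HP]].
    { intros k N. apply Hg. apply inv_le1. }
    exists phi, g. split; auto.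
    apply is_lim_seq_le_le with (u := fun _ => 0) (w := fun k => / INR (S k)).
    + intros k. split. apply Hpos. rewrite Hsym. left. apply HP.
    + apply is_lim_seq_const.
    + apply inv_lim.
  - exfalso.
    set (U := fun (i : G * R * nat) y =>
           let '(g, r, N) := i in 0 < r /\ (forall n, (N <= n)%nat -> r <= rho g (gs n)) /\ rho g y < r).
    destruct (Hc _ U) as [l Hl].
    + intros [[g r] N] y [Hr [HN Hy]]. exists (r - rho g y). split. lra.
      intros z Hz. split; auto. split; auto. specialize (Htri g y z). lra.
    + intros x Kx. assert (Hx := not_ex_all_not _ _ Hn x). simpl in Hx.
      apply not_all_ex_not in Hx. destruct Hx as [r Hr].
      apply imply_to_and in Hr. destruct Hr as [Hr Hr2].
      apply not_all_ex_not in Hr2. destruct Hr2 as [N HN].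
      exists (x, r, N). simpl. split; auto. split.
      * intros n Hn2. destruct (Rle_dec r (rho x (gs n))); auto.
        exfalso. apply HN. exists n. split; auto. lra.
      * rewrite (proj2 (Hzero x x) eq_refl). exact Hr.
    + destruct (list_bound l) as [Nb HNb].
      destruct (Hl (gs Nb) (HM Nb)) as [[[g r] N] [Hin [Hr [HN Hy]]]].
      specialize (HNb _ Hin). simpl in HNb. specialize (HN Nb HNb). lra.
Qed.

Lemma D_props {G X : Type} (d : X -> X -> R) (rho : G -> G -> R) (e : G) (act : G -> X -> X) x x' :
  0 <= reg_metric d rho e act x x' /\
  (forall g, reg_metric d rho e act x x' <= sqrt (rho g e ^ 2 + d x (act g x') ^ 2)) /\
  (forall eps, 0 < eps -> exists g, sqrt (rho g e ^ 2 + d x (act g x') ^ 2) < reg_metric d rho e act x x' + eps).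
Proof.
  unfold reg_metric.
  destruct (glb_facts (fun r => exists g : G, r = sqrt (rho g e ^ 2 + d x (act g x') ^ 2))
     (sqrt (rho e e ^ 2 + d x (act e x') ^ 2))) as [H1 [H2 H3]].
  - exists e; auto.
  - intros s [g ->]. apply sqrt_pos.
  - split; auto. split.
    + intros g. apply H2. exists g; auto.
    + intros eps Heps. destruct (H3 eps Heps) as [s [[g ->] Hs]]. exists g; auto.
Qed.

Lemma D_le_d {G X : Type} (d : X -> X -> R) (mul : G -> G -> G) (inv : G -> G) (rho : G -> G -> R) (e : G) (act : G -> X -> X) x x' :
  is_metric d -> is_metric rho -> is_action mul e act ->
  reg_metric d rho e act x x' <= d x x'.
Proof.
  intros [Hp _] [_ [Hz _]] [Ha _].
  destruct (D_props d rho e act x x') as [_ [H _]].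
  specialize (H e). rewrite (proj2 (Hz e e) eq_refl), Ha in H.
  replace (0 ^ 2 + d x x' ^ 2) with (d x x' ^ 2) in H by ring.
  rewrite sqrt_pow2 in H; auto.
Qed.

Lemma rho_lim {G : Type} (rho : G -> G -> R) (h : nat -> G) g e :
  is_metric rho -> is_lim_seq (fun k => rho (h k) g) 0 ->
  is_lim_seq (fun k => rho (h k) e) (rho g e).
Proof.
  intros [_ [_ [Hs Ht]]] H. apply ev_lim. intros eps Heps.
  destruct (lim_ev _ _ H eps Heps) as [N HN]. exists N. intros n Hn.
  specialize (HN n Hn). assert (H1 := Ht (h n) g e). assert (H2 := Ht g (h n) e).
  rewrite (Hs g (h n)) in H2. lra.
Qed.

Lemma t_lim {G X : Type} (d : X -> X -> R) (rho : G -> G -> R) (act : G -> X -> X) (h : nat -> G) g y :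
  is_metric d -> action_compatible rho act (metric_conv d) ->
  is_lim_seq (fun k => rho (h k) g) 0 ->
  is_lim_seq (fun k => d (act (h k) y) (act g y)) 0.
Proof.
  intros [_ [Hz _]] Hmet H. apply (Hmet (fun _ => y) y h g); auto.
  unfold metric_conv. rewrite (proj2 (Hz y y) eq_refl). apply is_lim_seq_const.
Qed.

Lemma sqrt_lt_sq s c : 0 <= s -> sqrt s < c -> s < c ^ 2.
Proof.
  intros Hs H. destruct (Rlt_dec s (c^2)); auto. exfalso.
  assert (0 <= c). { assert (0 <= sqrt s) by apply sqrt_pos. lra. }
  assert (sqrt (c^2) <= sqrt s) by (apply sqrt_le_1_alt; lra).
  rewrite sqrt_pow2 in H1; lra.
Qed.

Lemma sq_lt_sqrt s c : 0 <= c -> c < sqrt s -> c ^ 2 < s.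
Proof.
  intros Hc H. destruct (Rlt_dec (c^2) s); auto. exfalso.
  assert (sqrt s <= sqrt (c^2)) by (apply sqrt_le_1_alt; lra).
  rewrite sqrt_pow2 in H0; lra.
Qed.

Lemma W2
  (X : Type) (d : X -> X -> R) (w : (nat -> X) -> X -> Prop)
  (G : Type) (mul : G -> G -> G) (inv : G -> G) (e : G) (rho : G -> G -> R)
  (act : G -> X -> X)
  (Hd : is_metric d)
  (Hw_conv : is_convergence w)
  (Hw_weak : is_weak_convergence d w)
  (HG : is_proper_metric_group mul inv e rho)
  (Hmet : action_compatible rho act (metric_conv d)) :
  forall (u : nat -> X) (x : X), w u x ->
      forall y : X, Rbar_le (Finite (reg_metric d rho e act x y))
                      (LimInf_seq (fun n => reg_metric d rho e act (u n) y)).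
Proof.
  intros u x Hux y.
  set (D := reg_metric d rho e act).
  destruct (ex_LimInf_seq (fun n => D (u n) y)) as [l Hl].
  rewrite (is_LimInf_seq_unique _ _ Hl).
  destruct (Rbar_le_lt_dec (D x y) l) as [Hle|Hlt]; auto. exfalso.
  assert (Hc : exists c, c < D x y /\ forall N, exists n, (N <= n)%nat /\ D (u n) y < c).
  { destruct l as [l0| |]; simpl in Hlt, Hl.
    - exists ((l0 + D x y) / 2). split. lra.
      assert (Hp : 0 < (D x y - l0) / 2) by lra.
      destruct (Hl (mkposreal _ Hp)) as [H1 _]. intros N. destruct (H1 N) as [n [Hn Hn2]].
      exists n. split; auto. simpl in Hn2. lra.
    - contradiction.
    - exists (D x y - 1). split. lra. intros N. apply Hl. }
  destruct Hc as [c [Hc Hinf]].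
  destruct (extract (fun _ n => exists g, sqrt (rho g e ^ 2 + d (u n) (act g y) ^ 2) < c)) as [phi [Hphi HP]].
  { intros _ N. destruct (Hinf N) as [n [Hn Hn2]]. exists n. split; auto.
    destruct (D_props d rho e act (u n) y) as [_ [_ H]].
    destruct (H (c - D (u n) y) ltac:(lra)) as [g Hg]. exists g. unfold D in *. lra. }
  destruct (choice_nat _ HP) as [gk Hgk].
  assert (Hdp := proj1 Hd).
  assert (Hrm : is_metric rho) by apply HG.
  assert (Hrp := proj1 Hrm).
  assert (Hb1 : forall k, rho (gk k) e <= c).
  { intros k. specialize (Hgk k). assert (H := sq_le (rho (gk k) e) (d (u (phi k)) (act (gk k) y)) (Hrp _ _)). lra. }
  destruct (seqcompact mul inv e rho HG gk c Hb1) as [chi [gs [Hchi Hg]]].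
  assert (Hw2 := proj2 Hw_conv _ _ _ Hphi Hux). simpl in Hw2.
  assert (Hw3 := proj2 Hw_conv _ _ _ Hchi Hw2). simpl in Hw3.
  set (a := d x (act gs y)). set (b := rho gs e).
  assert (HW2 := proj1 (proj2 Hw_weak) _ _ Hw3 (act gs y)).
  assert (Hrl := rho_lim rho _ _ e Hrm Hg).
  assert (Htl := t_lim d rho act _ _ y Hd Hmet Hg).
  assert (HDs : D x y <= sqrt (b ^ 2 + a ^ 2)) by apply (D_props d rho e act x y).
  assert (Hc0 : 0 < c). { specialize (Hgk 0%nat). assert (H:= sqrt_pos (rho (gk 0%nat) e ^ 2 + d (u (phi 0%nat)) (act (gk 0%nat) y) ^ 2)). lra. }
  assert (Hdelta : c ^ 2 < b ^ 2 + a ^ 2) by (apply sq_lt_sqrt; lra).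
  assert (Ha0 : 0 <= a) by apply Hdp. assert (Hb0 : 0 <= b) by apply Hrp.
  set (delta := b ^ 2 + a ^ 2 - c ^ 2).
  set (eps := delta / (2 * b + 4 * a + 1)).
  assert (Heps : eps * (2 * b + 4 * a + 1) = delta) by (unfold eps; field; lra).
  assert (Heps0 : 0 < eps) by (unfold eps; apply Rdiv_lt_0_compat; unfold delta; lra).
  destruct (liminf_ev _ _ HW2 eps Heps0) as [N1 HN1].
  destruct (lim_ev _ _ Hrl eps Heps0) as [N2 HN2].
  destruct (lim_ev _ _ Htl eps Heps0) as [N3 HN3].
  set (n := Nat.max N1 (Nat.max N2 N3)).
  specialize (HN1 n ltac:(lia)). specialize (HN2 n ltac:(lia)). specialize (HN3 n ltac:(lia)).
  simpl in HN1, HN2, HN3.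
  specialize (Hgk (chi n)).
  apply sqrt_lt_sq in Hgk; [| assert (0 <= rho (gk (chi n)) e ^ 2) by (apply pow2_ge_0); assert (0 <= d (u (phi (chi n))) (act (gk (chi n)) y) ^ 2) by (apply pow2_ge_0); lra].
  assert (Htri := proj2 (proj2 (proj2 Hd)) (u (phi (chi n))) (act (gk (chi n)) y) (act gs y)).
  fold b in HN2. fold a in HN1.   assert (H1 := sqlb (rho (gk (chi n)) e) b eps (Hrp _ _) Hb0 ltac:(lra) ltac:(lra)).
  assert (H2 := sqlb (d (u (phi (chi n))) (act (gk (chi n)) y)) a (2 * eps) (Hdp _ _) Ha0 ltac:(lra) ltac:(lra)).
  assert (eps * (2 * b + 4 * a) < delta) by nra.
  unfold delta in *. lra.
Qed.

Lemma W1
  (X : Type) (d : X -> X -> R) (w : (nat -> X) -> X -> Prop)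
  (G : Type) (mul : G -> G -> G) (inv : G -> G) (e : G) (rho : G -> G -> R)
  (act : G -> X -> X)
  (Hd : is_metric d)
  (Hw_conv : is_convergence w)
  (Hw_weak : is_weak_convergence d w)
  (HG : is_proper_metric_group mul inv e rho)
  (Hact : is_action mul e act)
  (Hiso : is_isometric_action d act)
  (Hweak : action_compatible rho act w) :
  forall (u : nat -> X) (y : X),
      (exists M : R, forall n, reg_metric d rho e act (u n) y <= M) ->
      exists (phi : nat -> nat) (x : X),
        strictly_increasing phi /\ w (fun k => u (phi k)) x.
Proof.
  intros u y [M HM].
  destruct (choice_nat (fun n g => sqrt (rho g e ^ 2 + d (u n) (act g y) ^ 2) < M + 1)) as [gs Hgs].
  { intros n. destruct (D_props d rho e act (u n) y) as [_ [_ H]].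
    destruct (H 1 ltac:(lra)) as [g Hg]. exists g. specialize (HM n). lra. }
  assert (Hdp := proj1 Hd).
  assert (Hrp := proj1 (proj1 (proj2 (proj1 HG)))).
  assert (Hb1 : forall n, rho (gs n) e <= M + 1).
  { intros n. specialize (Hgs n). assert (H := sq_le (rho (gs n) e) (d (u n) (act (gs n) y)) (Hrp _ _)). lra. }
  assert (Hb2 : forall n, d (u n) (act (gs n) y) <= M + 1).
  { intros n. specialize (Hgs n). assert (H := sq_le (d (u n) (act (gs n) y)) (rho (gs n) e) (Hdp _ _)).
    rewrite Rplus_comm in H. lra. }
  assert (Hinv : forall g x, act g (act (inv g) x) = x).
  { intros g x. destruct Hact as [Ha1 Ha2]. rewrite <- Ha2.
    destruct HG as [[[_ [_ [_ [_ Hgi]]]] _] _]. rewrite Hgi. apply Ha1. }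
  set (v := fun n => act (inv (gs n)) (u n)).
  destruct Hw_weak as [HW1 _].
  destruct (HW1 v y) as [psi [v0 [Hpsi Hv0]]].
  { exists (M + 1). intros n. unfold v. rewrite <- (Hiso (gs n)), Hinv. apply Hb2. }
  destruct (seqcompact mul inv e rho HG (fun k => gs (psi k)) (M + 1)) as [chi [g [Hchi Hg]]].
  { intros k. apply Hb1. }
  exists (fun k => psi (chi k)), (act g v0). split.
  - apply si_comp; auto.
  - assert (Hw2 := proj2 Hw_conv _ _ _ Hchi Hv0). simpl in Hw2.
    assert (H := Hweak _ _ _ _ Hw2 Hg). simpl in H.
    replace (fun k => u (psi (chi k))) with (fun n => act (gs (psi (chi n))) (v (psi (chi n)))); auto.
    apply functional_extensionality. intros k. unfold v. apply Hinv.
Qed.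

Lemma W3
  (X : Type) (d : X -> X -> R) (w : (nat -> X) -> X -> Prop)
  (G : Type) (mul : G -> G -> G) (inv : G -> G) (e : G) (rho : G -> G -> R)
  (act : G -> X -> X)
  (Hd : is_metric d)
  (Hw_conv : is_convergence w)
  (Hw_weak : is_weak_convergence d w)
  (HG : is_proper_metric_group mul inv e rho)
  (Hact : is_action mul e act)
  (Hmet : action_compatible rho act (metric_conv d)) :
  forall (u : nat -> X) (x y : X), w u x ->
      is_lim_seq (fun n => reg_metric d rho e act (u n) y) (reg_metric d rho e act x y) ->
      is_lim_seq (fun n => reg_metric d rho e act (u n) x) 0.
Proof.
  intros u x y Hux Hlim.
  set (D := reg_metric d rho e act) in *.
  assert (HD0 : forall p q, 0 <= D p q) by (intros; apply (D_props d rho e act)).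
  destruct (classic (exists eps0, 0 < eps0 /\ forall N, exists n, (N <= n)%nat /\ eps0 <= D (u n) x))
    as [[eps0 [He0 Hinf]]|Hn].
  2:{ apply ev_lim. intros eps Heps. apply NNPP. intros Hne. apply Hn. exists eps. split; auto.
      intros N. assert (H := not_ex_all_not _ _ Hne N). simpl in H.
      apply not_all_ex_not in H. destruct H as [n Hn2]. apply imply_to_and in Hn2.
      destruct Hn2 as [Hn2 Hn3]. exists n. split; auto.
      destruct (Rle_dec eps (D (u n) x)); auto. exfalso. apply Hn3. specialize (HD0 (u n) x). lra. }
  exfalso.
  destruct (lim_ev _ _ Hlim 1 ltac:(lra)) as [N1 HN1].
  destruct (extract (fun _ n => eps0 <= D (u n) x /\ D (u n) y < D x y + 1)) as [phi [Hphi HP]].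
  { intros _ N. destruct (Hinf (Nat.max N N1)) as [n [Hn Hn2]]. exists n. split. lia.
    split; auto. specialize (HN1 n ltac:(lia)). lra. }
  destruct (choice_nat (fun n g => sqrt (rho g e ^ 2 + d (u n) (act g y) ^ 2) < D (u n) y + / INR (S n))) as [gs Hgs].
  { intros n. destruct (D_props d rho e act (u n) y) as [_ [_ H]].
    destruct (H (/ INR (S n)) (proj1 (inv_le1 n))) as [g Hg]. exists g. exact Hg. }
  assert (Hdp := proj1 Hd).
  assert (Hrm : is_metric rho) by apply HG.
  assert (Hrp := proj1 Hrm).
  assert (Hb1 : forall k, rho (gs (phi k)) e <= D x y + 2).
  { intros k. specialize (Hgs (phi k)). specialize (HP k).
    assert (H := sq_le (rho (gs (phi k)) e) (d (u (phi k)) (act (gs (phi k)) y)) (Hrp _ _)).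
    assert (H2 := inv_le1 (phi k)). lra. }
  destruct (seqcompact mul inv e rho HG (fun k => gs (phi k)) _ Hb1) as [chi [g [Hchi Hg]]].
  assert (Hpsi := si_comp _ _ Hphi Hchi).
  assert (Hw2 := proj2 Hw_conv _ _ _ Hphi Hux). simpl in Hw2.
  assert (Hw3 := proj2 Hw_conv _ _ _ Hchi Hw2). simpl in Hw3.
  set (a := d x (act g y)). set (b := rho g e).
  assert (HW2 := proj1 (proj2 Hw_weak) _ _ Hw3 (act g y)).
  assert (Hrl := rho_lim rho _ _ e Hrm Hg).
  assert (Htl := t_lim d rho act _ _ y Hd Hmet Hg).
  assert (Hs := lim_sub _ _ _ Hpsi Hlim). cbv beta in Hs.
  assert (He := lim_sub _ _ _ Hpsi inv_lim). cbv beta in He.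
  assert (Hsum := is_lim_seq_plus' _ _ _ _ Hs He).
  assert (Hv := is_lim_seq_minus' _ _ _ _ (is_lim_seq_mult' _ _ _ _ Hsum Hsum) (is_lim_seq_mult' _ _ _ _ Hrl Hrl)).
  fold b in Hv.
  assert (HDs : D x y <= sqrt (b ^ 2 + a ^ 2)) by apply (D_props d rho e act x y).
  assert (Ha0 : 0 <= a) by apply Hdp. assert (Hb0 : 0 <= b) by apply Hrp.
  assert (HDs2 : D x y * D x y <= b ^ 2 + a ^ 2).
  { assert (H := sqrt_sqrt (b ^ 2 + a ^ 2) ltac:(nra)). specialize (HD0 x y).
    assert (0 <= sqrt (b ^ 2 + a ^ 2)) by apply sqrt_pos. nra. }
  assert (Hz : is_lim_seq (fun k => d (u (phi (chi k))) (act g y)) a).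
  { apply ev_lim. intros eps Heps.
    destruct (liminf_ev _ _ HW2 eps Heps) as [M1 HM1].
    destruct (lim_ev _ _ Htl (eps / 2) ltac:(lra)) as [M2 HM2].
    destruct (lim_ev _ _ Hv ((eps / 2) ^ 2) ltac:(nra)) as [M3 HM3].
    exists (Nat.max M1 (Nat.max M2 M3)). intros n Hn.
    specialize (HM1 n ltac:(lia)). specialize (HM2 n ltac:(lia)). specialize (HM3 n ltac:(lia)).
    cbv beta in HM1, HM2, HM3. fold a in HM1.
    set (kk := phi (chi n)) in *.
    specialize (Hgs kk).
    assert (Hq := sqrt_lt_sq (rho (gs kk) e ^ 2 + d (u kk) (act (gs kk) y) ^ 2) _ ltac:(assert (0 <= rho (gs kk) e ^ 2) by apply pow2_ge_0; assert (0 <= d (u kk) (act (gs kk) y) ^ 2) by apply pow2_ge_0; lra) Hgs).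
    assert (Htri := proj2 (proj2 (proj2 Hd)) (u kk) (act (gs kk) y) (act g y)).
    assert (Hdk := Hdp (u kk) (act (gs kk) y)).
    assert (Hdk2 : d (u kk) (act (gs kk) y) ^ 2 < a ^ 2 + (eps / 2) ^ 2).
    { assert (H0 : D x y * D x y - b * b <= a ^ 2) by nra. 
      replace ((D (u kk) y + / INR (S kk)) ^ 2) with ((D (u kk) y + / INR (S kk)) * (D (u kk) y + / INR (S kk))) in Hq by ring.
      replace ((D x y + 0) * (D x y + 0)) with (D x y * D x y) in HM3 by ring.
      nra. }
    assert (d (u kk) (act (gs kk) y) < a + eps / 2) by nra.
    lra. }
  assert (HW3 := proj2 (proj2 Hw_weak) _ _ _ Hw3 Hz).
  destruct (lim_ev _ _ HW3 eps0 He0) as [M HM].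
  specialize (HM M (le_n _)). cbv beta in HM.
  assert (HDd := D_le_d d mul inv rho e act (u (phi (chi M))) x Hd Hrm Hact).
  destruct (HP (chi M)) as [HP1 _]. fold D in HDd. lra.
Qed.

Theorem proposition2p11
  (X : Type) (d : X -> X -> R) (w : (nat -> X) -> X -> Prop)
  (G : Type) (mul : G -> G -> G) (inv : G -> G) (e : G) (rho : G -> G -> R)
  (act : G -> X -> X)
  (Hd : is_metric d)
  (Hw_conv : is_convergence w)
  (Hw_weak : is_weak_convergence d w)
  (HG : is_proper_metric_group mul inv e rho)
  (Hact : is_action mul e act)
  (Hiso : is_isometric_action d act)
  (Hmet : action_compatible rho act (metric_conv d))
  (Hweak : action_compatible rho act w) :
  is_weak_convergence (reg_metric d rho e act) w.
Proof.
  split; [|split].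
  - exact (W1 X d w G mul inv e rho act Hd Hw_conv Hw_weak HG Hact Hiso Hweak).
  - exact (W2 X d w G mul inv e rho act Hd Hw_conv Hw_weak HG Hmet).
  - exact (W3 X d w G mul inv e rho act Hd Hw_conv Hw_weak HG Hact Hmet).
Qed.
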